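(* Let $\mathcal Y\subset\mathbb R^d$ be finite with no element a strict convex combination of others, $Y$ the matrix with columns $y\in\mathcal Y$, $\varepsilon>0$, and $\mathbf Z$ a centred random variable on $\mathbb R^d$ whose distribution belongs to an exponential family with positive density (typically standard multivariate normal). Define $F_{\varepsilon,\mathcal C}(\theta)=\mathbb E[\max_{y\in\mathcal Y}(\theta+\varepsilon\mathbf Z)^\top y]$ for $\theta\in\mathbb R^d$ and $F_{\varepsilon,\Delta}(s)=\mathbb E[\max_{y\in\mathcal Y}s(y)+\varepsilon\mathbf Z^\top y]$ for $s\in\mathbb R^{\mathcal Y}$, and let $\Omega_{\varepsilon,\mathcal C}=F^*_{\varepsilon,\mathcal C}$ and $\Omega_{\varepsilon,\Delta}=F^*_{\varepsilon,\Delta}$ be their Fenchel conjugates. Then for every $\mu\in\mathbb R^d$, $$\Omega_{\varepsilon,\mathcal C}(\mu)=\inf\{\Omega_{\varepsilon,\Delta}(q): q\in\mathbb R^{\mathcal Y},\ Yq=\mu\}.$$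
   Context: $\mathbb R^{\mathcal Y}$ denotes vectors indexed by $\mathcal Y$ with components $s(y)$; the infimum over an empty set is $+\infty$. *)

(* Defs.v *)
From HB Require Import structures.
From mathcomp Require Import all_boot all_order all_algebra.
From mathcomp Require Import all_classical all_reals all_analysis.
Set Implicit Arguments. Unset Strict Implicit. Unset Printing Implicit Defensive.
Import Order.TTheory GRing.Theory Num.Theory.
Local Open Scope classical_set_scope.
Local Open Scope ring_scope.

Section Defs.
Variable R : realType.

Definition dotp (d : nat) (u v : 'I_d -> R) : R := \sum_(k < d) u k * v k.

Definition vec_of (d : nat) (s : seq R) : 'I_d -> R := fun k => nth 0 s k.

(* Iterated Lebesgue integral on R^n (Tonelli):
   iint n g = \int dx_1 ... \int dx_n g [:: x_1; ...; x_n].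
   For nonnegative measurable g this is the Lebesgue integral on R^n. *)
Fixpoint iint (n : nat) (g : seq R -> \bar R) : \bar R :=
  match n with
  | 0 => g [::]
  | n'.+1 => (\int[@lebesgue_measure R]_x iint n' (fun s => g (x :: s)))%E
  end.

Definition expfam_pos_density (d : nat) (p : ('I_d -> R) -> R) : Prop :=
  (forall z, 0 < p z) /\
  exists (m : nat) (h : ('I_d -> R) -> R) (Tst : ('I_d -> R) -> 'I_m -> R)
         (eta : 'I_m -> R) (A : R),
    (forall z, 0 <= h z) /\
    forall z, p z = h z * expR (dotp eta (Tst z) - A).

(* The random vector Z = (Z_0,...,Z_{d-1}) on (T, P) has density p:
   its law agrees with p(z) dz on all Borel rectangles (a pi-system
   generating the Borel sigma-algebra of R^d). *)
Definition has_density (dT : measure_display) (T : measurableType dT)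
  (P : probability T R) (d : nat) (Z : 'I_d -> T -> R)
  (p : ('I_d -> R) -> R) : Prop :=
  forall B : 'I_d -> set R, (forall k, measurable (B k)) ->
    P (\bigcap_(k in [set: 'I_d]) (Z k @^-1` B k)) =
    iint d (fun s => ((\prod_(k < d) \1_(B k) (vec_of s k)) * p (vec_of s))%:E).

Definition fenchel (J : finType) (f : (J -> R) -> \bar R) (mu : J -> R) : \bar R :=
  ereal_sup [set ((\sum_(j : J) th j * mu j)%:E - f th)%E | th in [set: J -> R]].

Definition F_C (dT : measure_display) (T : measurableType dT)
  (P : probability T R) (d : nat) (Z : 'I_d -> T -> R)
  (I : finType) (y : I -> 'I_d -> R) (eps : R) (theta : 'I_d -> R) : \bar R :=
  (\int[P]_w \big[Order.max/-oo%E]_(i : I)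
        (dotp (fun k => theta k + eps * Z k w) (y i))%:E)%E.

Definition F_D (dT : measure_display) (T : measurableType dT)
  (P : probability T R) (d : nat) (Z : 'I_d -> T -> R)
  (I : finType) (y : I -> 'I_d -> R) (eps : R) (s : I -> R) : \bar R :=
  (\int[P]_w \big[Order.max/-oo%E]_(i : I)
        (s i + eps * dotp (fun k => Z k w) (y i))%:E)%E.

Definition no_convex_comb (d : nat) (I : finType) (y : I -> 'I_d -> R) : Prop :=
  forall i : I, ~ exists q : I -> R,
    [/\ forall j, 0 <= q j, q i = 0, \sum_(j : I) q j = 1 &
        forall k, y i k = \sum_(j : I) q j * y j k].

End Defs.

(* Main.v *)
Require Import Defs.
From HB Require Import structures.
From mathcomp Require Import all_boot all_order all_algebra.
From mathcomp Require Import all_classical all_reals all_analysis.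
From mathcomp Require Import measurable_realfun.
From mathcomp Require Import ring lra.
Import Order.TTheory GRing.Theory Num.Theory.
Local Open Scope classical_set_scope.
Local Open Scope ring_scope.

Section Dual.
Variables (R : realType) (I : finType) (F : (I -> R) -> R).
Hypothesis Fconv : forall s t (l : R), 0 <= l <= 1 ->
  F (fun i => l * s i + (1 - l) * t i) <= l * F s + (1 - l) * F t.

Lemma key_ineq (A1 A2 F1 F2 c t r : R) : 0 < t -> 0 < r ->
  (t / (t + r)) * A1 + (1 - t / (t + r)) * A2 - c <=
  (t / (t + r)) * F1 + (1 - t / (t + r)) * F2 ->
  (A1 - c - F1) / r <= (c + F2 - A2) / t.
Proof.
move=> t0 r0 H.
have tr0 : 0 < t + r by rewrite addr_gt0.
have e : 1 - t / (t + r) = r / (t + r).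
  by field; rewrite gt_eqF.
rewrite e in H.
have H2 : t * A1 + r * A2 - (t + r) * c <= t * F1 + r * F2.
  have := H; rewrite -(ler_pM2r tr0).
  have -> : (t / (t + r) * A1 + r / (t + r) * A2 - c) * (t + r) = t * A1 + r * A2 - (t + r) * c.
    by field; rewrite gt_eqF.
  have -> : (t / (t + r) * F1 + r / (t + r) * F2) * (t + r) = t * F1 + r * F2.
    by field; rewrite gt_eqF.
  done.
rewrite ler_pdivrMr // mulrAC ler_pdivlMr //.
nra.
Qed.

Lemma step (X : Type) (l : X -> R) (B : X -> I -> R) (u : I -> R) (c : R) (x0 : X) :
  (forall x x' (lam : R), 0 <= lam <= 1 -> exists z,
     l z = lam * l x + (1 - lam) * l x' /\
     B z = (fun i => lam * B x i + (1 - lam) * B x' i)) ->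
  (forall x, l x - F (B x) <= c) ->
  exists a, forall x t, l x + t * a - F (fun i => B x i + t * u i) <= c.
Proof.
move=> mix H.
pose Lo := [set v | exists x r, 0 < r /\ v = (l x - c - F (fun i => B x i - r * u i)) / r].
have key : forall x t x' r, 0 < t -> 0 < r ->
   (l x' - c - F (fun i => B x' i - r * u i)) / r <= (c + F (fun i => B x i + t * u i) - l x) / t.
  move=> x t x' r t0 r0.
  have tr0 : 0 < t + r by rewrite addr_gt0.
  set lam := t / (t + r).
  have hl : 0 <= lam <= 1.
    apply/andP; split; first by rewrite /lam divr_ge0 // ltW.
    by rewrite /lam ler_pdivrMr // mul1r lerDl ltW.
  have [z [lz Bz]] := mix x' x lam hl.
  apply: key_ineq => //.
  have := H z; rewrite lz.
  have -> : B z = (fun i => lam * (B x' i - r * u i) + (1 - lam) * (B x i + t * u i)).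
    rewrite Bz; apply: funext => i.
    rewrite /lam; field; rewrite gt_eqF //.
  move=> Hz.
  have hF := Fconv (fun i => B x' i - r * u i) (fun i => B x i + t * u i) lam hl.
  move: Hz hF; set G := F _; set G1 := F _; set G2 := F _ => Hz hF.
  rewrite -/lam; lra.
pose a := sup Lo.
have Lo0 : Lo !=set0.
  by exists ((l x0 - c - F (fun i => B x0 i - 1 * u i)) / 1); exists x0, 1.
have Loub : forall x t, 0 < t -> ubound Lo ((c + F (fun i => B x i + t * u i) - l x) / t).
  move=> x t t0 v [x' [r [r0 ->]]]; exact: key.
have hasub : has_ubound Lo by exists ((c + F (fun i => B x0 i + 1 * u i) - l x0) / 1); apply: Loub.
exists a => x t.
have [t0|t0|->] := ltgtP t 0.
- have r0 : 0 < - t by rewrite oppr_gt0.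
  have : (l x - c - F (fun i => B x i - (- t) * u i)) / (- t) <= a.
    by apply: ub_le_sup => //; exists x, (- t).
  rewrite ler_pdivrMr // => h.
  have -> : (fun i => B x i + t * u i) = (fun i => B x i - - t * u i).
    by apply: funext => i; rewrite mulNr opprK.
  move: h; rewrite mulrN => h.
  rewrite -[_ - _]opprK lerNl.
  move: h; set FF := F _; move=> h.
  have -> : t * a = - (a * - t) by rewrite mulrN opprK mulrC.
  lra.
- have : a <= (c + F (fun i => B x i + t * u i) - l x) / t.
    by apply: ge_sup => //; apply: Loub.
  rewrite ler_pdivlMr // => h.
  move: h; set FF := F _; move=> h.
  rewrite mulrC; lra.
- rewrite mul0r addr0.
  have -> : (fun i => B x i + 0 * u i) = B x by apply: funext => i; rewrite mul0r addr0.
  exact: H.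
Qed.

End Dual.

Lemma dotp_comb (R : realType) d (a b : R) (u v w : 'I_d -> R) :
  dotp (fun k => a * u k + b * v k) w = a * dotp u w + b * dotp v w.
Proof.
rewrite /dotp !mulr_sumr -big_split /=; apply: eq_bigr => k _; ring.
Qed.

Lemma dotp_delta (R : realType) d (lam : R) (k : 'I_d) (v : 'I_d -> R) :
  dotp (fun m => lam * (m == k)%:R) v = lam * v k.
Proof.
rewrite /dotp (bigD1 k) //= eqxx big1 ?addr0; first by rewrite mulr1.
by move=> m /negbTE ->; rewrite mulr0 mul0r.
Qed.

Lemma dotp0 (R : realType) d (v : 'I_d -> R) : dotp (fun _ => 0) v = 0.
Proof. by rewrite /dotp big1 // => k _; rewrite mul0r. Qed.

Lemma lin_bound (R : realType) (D C : R) : (forall lam : R, lam * D <= C) -> D = 0.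
Proof.
move=> H; apply/eqP; apply/negP => /negP D0.
have := H ((C + 1) / D); rewrite mulrAC -mulrA divff // mulr1; lra.
Qed.

Section Ext.
Variables (R : realType) (I : finType) (F : (I -> R) -> R).
Hypothesis Fconv : forall s t (l : R), 0 <= l <= 1 ->
  F (fun i => l * s i + (1 - l) * t i) <= l * F s + (1 - l) * F t.
Variables (d : nat) (y : I -> 'I_d -> R) (mu : 'I_d -> R) (c : R).
Hypothesis H0 : forall th, dotp th mu - F (fun i => dotp th (y i)) <= c.

Lemma ext_seq (s : seq I) : uniq s -> exists a : I -> R, forall th (t : I -> R),
  dotp th mu + \sum_(j <- s) t j * a j
    - F (fun k => dotp th (y k) + (if k \in s then t k else 0)) <= c.
Proof.
elim: s => [_|i s IH] /=.
  exists (fun _ => 0) => th t; rewrite big_nil addr0.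
  have -> : (fun k => dotp th (y k) + (if k \in [::] then t k else 0)) =
            (fun k => dotp th (y k)) by apply: funext => k; rewrite in_nil addr0.
  exact: H0.
move=> /andP[his us]; have [a Ha] := IH us.
pose l (p : ('I_d -> R) * (I -> R)) := dotp p.1 mu + \sum_(j <- s) p.2 j * a j.
pose B (p : ('I_d -> R) * (I -> R)) :=
  fun k => dotp p.1 (y k) + (if k \in s then p.2 k else 0).
have mixP : forall (x x' : ('I_d -> R) * (I -> R)) (lam : R), 0 <= lam <= 1 ->
    exists z, l z = lam * l x + (1 - lam) * l x' /\
      B z = (fun k => lam * B x k + (1 - lam) * B x' k).
  move=> [th t] [th' t'] lam hl.
  exists ((fun k => lam * th k + (1 - lam) * th' k),
          (fun j => lam * t j + (1 - lam) * t' j)); split.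
    rewrite /l /= dotp_comb.
    have -> : \sum_(j <- s) (lam * t j + (1 - lam) * t' j) * a j =
      lam * \sum_(j <- s) t j * a j + (1 - lam) * \sum_(j <- s) t' j * a j.
      by rewrite !mulr_sumr -big_split /=; apply: eq_bigr => j _; ring.
    ring.
  apply: funext => k; rewrite /B /= dotp_comb; case: (k \in s); ring.
have HP : forall x, l x - F (B x) <= c by move=> [th t]; apply: Ha.
have [b Hb] := @step R I F Fconv _ l B (fun k => (k == i)%:R) c
   ((fun _ => 0), (fun _ => 0)) mixP HP.
exists (fun j => if j == i then b else a j) => th t.
have := Hb (th, t) (t i); rewrite /l /B /=.
have -> : \sum_(j <- i :: s) t j * (if j == i then b else a j) =
          t i * b + \sum_(j <- s) t j * a j.
  rewrite big_cons eqxx; congr (_ + _); apply: eq_big_seq => j js.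
  by case: eqP => // ji; move: js; rewrite ji (negbTE his).
have -> : (fun k => dotp th (y k) + (if k \in i :: s then t k else 0)) =
    (fun k => dotp th (y k) + (if k \in s then t k else 0) + t i * (k == i)%:R).
  apply: funext => k; rewrite in_cons; case: (eqVneq k i) => [->|ki] /=.
    by rewrite (negbTE his) mulr1 addr0.
  by rewrite mulr0 addr0.
move=> h; apply: le_trans h; rewrite addrA; lra.
Qed.

Lemma dual_exists : exists q : I -> R,
  (forall k, \sum_(i : I) q i * y i k = mu k) /\
  (forall s, \sum_(j : I) s j * q j - F s <= c).
Proof.
have [a Ha] := @ext_seq (enum I) (enum_uniq (T:=I) I).
have Ha' : forall th (t : I -> R), dotp th mu + \sum_(j : I) t j * a j
    - F (fun k => dotp th (y k) + t k) <= c.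
  move=> th t; have := Ha th t.
  rewrite big_enum /=.
  have -> : (fun k => dotp th (y k) + (if k \in enum I then t k else 0)) =
            (fun k => dotp th (y k) + t k) by apply: funext => k; rewrite mem_enum.
  done.
exists a; split; last first.
  move=> s; have := Ha' (fun _ => 0) s; rewrite dotp0 add0r.
  have -> // : (fun k => dotp (fun _ => 0) (y k) + s k) = s.
  by apply: funext => k; rewrite dotp0 add0r.
move=> k; apply/eqP; rewrite eq_sym -subr_eq0; apply/eqP.
apply: (@lin_bound R _ (c + F (fun _ => 0))) => lam.
have := Ha' (fun m => lam * (m == k)%:R) (fun j => - (lam * y j k)).
rewrite dotp_delta.
have -> : (fun k0 => dotp (fun m => lam * (m == k)%:R) (y k0) + - (lam * y k0 k)) =
          (fun _ => 0) by apply: funext => j; rewrite dotp_delta addrN.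
have -> : \sum_j - (lam * y j k) * a j = - (lam * \sum_j a j * y j k).
  by rewrite mulr_sumr -sumrN; apply: eq_bigr => j _; ring.
rewrite mulrBr; lra.
Qed.

End Ext.

Section Meas.
Variables (R : realType) (d : nat) (I : finType) (y : I -> 'I_d -> R) (eps : R)
  (dT : measure_display) (T : measurableType dT) (P : probability T R)
  (Z : 'I_d -> T -> R).
Hypothesis HZint : forall k, P.-integrable [set: T] (fun w => (Z k w)%:E).
Hypothesis HI : (0 < #|I|)%N.

Let h (s : I -> R) (i : I) (w : T) : \bar R :=
  (s i + eps * dotp (fun k => Z k w) (y i))%:E.
Let Gm (s : I -> R) (w : T) : \bar R := \big[Order.max/-oo%E]_(i : I) h s i w.

Lemma h_int s i : P.-integrable [set: T] (h s i).
Proof.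
have H1 : P.-integrable [set: T] ((EFin \o cst (s i)) \+
    (fun w => \sum_(k < d) ((eps * y i k)%:E * (Z k w)%:E)%E)).
  apply: integrableD; first exact: measurableT.
    exact: finite_measure_integrable_cst.
  apply: (integrable_sum measurableT) => k _.
  exact: (integrableZl measurableT).
apply: eq_integrable H1; first exact: measurableT.
move=> w _ /=.
rewrite /h sumEFin -EFinD; congr (_%:E); congr (_ + _).
rewrite /dotp mulr_sumr; apply: eq_bigr => k _; ring.
Qed.

Lemma Gm_meas s : measurable_fun [set: T] (fun w => Gm s w).
Proof.
rewrite /Gm; elim: (index_enum I) => [|i r IH].
  under eq_fun do rewrite big_nil; exact: measurable_cst.
under eq_fun do rewrite big_cons.
apply: measurable_maxe => //; exact: (measurable_int _ (h_int s i)).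
Qed.

Lemma Gm_int s : P.-integrable [set: T] (Gm s).
Proof.
have [j0 _] := card_gt0P HI.
apply: (le_integrable measurableT (Gm_meas s) (g := fun w => \sum_(i : I) (abse \o h s i) w)).
  2: { apply: (integrable_sum measurableT) => i _; exact: integrable_abse (h_int s i). }
  move=> w _; rewrite /Gm.
  have [i0 _ ->] := @Order.TotalTheory.eq_bigmax _ _ I -oo%E j0 xpredT (fun i => h s i w) isT
     (fun i _ => leNye _).
  rewrite [X in (_ <= X)%E]gee0_abs; last first.
    by apply: sume_ge0 => i _; exact: abse_ge0.
  rewrite (bigD1 i0) //=; apply: leeDl; apply: sume_ge0 => i _; by rewrite lee_fin normr_ge0.
Qed.

Lemma FD_fin (s : I -> R) : F_D P Z y eps s \is a fin_num.
Proof. exact: (integrable_fin_num measurableT (Gm_int s)). Qed.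

Lemma FD_conv (s t : I -> R) (lam : R) : 0 <= lam <= 1 ->
  (F_D P Z y eps (fun i => (lam * s i + (1 - lam) * t i)%R) <=
   lam%:E * F_D P Z y eps s + (1 - lam)%:E * F_D P Z y eps t)%E.
Proof.
move=> /andP[l0 l1].
have l0' : (0 <= (1 - lam)%:E)%E by rewrite lee_fin subr_ge0.
have i1 := integrableZl measurableT lam (Gm_int s).
have i2 := integrableZl measurableT (1 - lam) (Gm_int t).
rewrite /F_D -(integralZl measurableT (Gm_int s)) -(integralZl measurableT (Gm_int t)).
rewrite -(integralD measurableT i1 i2).
apply: (le_integral measurableT (Gm_int _) (integrableD measurableT i1 i2)) => w _ /=.
apply: Order.POrderTheory.bigmax_le; first exact: leNye.
move=> i _.
rewrite {1}/h. have -> : ((lam * s i + (1 - lam) * t i + eps * dotp (fun k => Z k w) (y i))%:E =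
   lam%:E * h s i w + (1 - lam)%:E * h t i w)%E.
  by rewrite /h -!EFinM -EFinD; congr (_%:E); ring.
apply: leeD; apply: lee_wpmul2l => //.
  by rewrite /Gm; exact: Order.TotalTheory.le_bigmax.
by rewrite /Gm; exact: Order.TotalTheory.le_bigmax.
Qed.

End Meas.

Theorem proposition8 (R : realType) (d : nat) (I : finType)
  (y : I -> 'I_d -> R)
  (HI : (0 < #|I|)%N) (Hinj : injective y) (Hext : no_convex_comb y)
  (eps : R) (Heps : 0 < eps)
  (dT : measure_display) (T : measurableType dT) (P : probability T R)
  (Z : 'I_d -> T -> R)
  (HZm : forall k, measurable_fun [set: T] (Z k))
  (HZint : forall k, P.-integrable [set: T] (fun w => (Z k w)%:E))
  (HZcent : forall k, (\int[P]_w (Z k w)%:E)%E = 0%E)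
  (p : ('I_d -> R) -> R) (Hp : expfam_pos_density p) (HZp : has_density P Z p)
  (mu : 'I_d -> R) :
  fenchel (F_C P Z y eps) mu =
  ereal_inf [set fenchel (F_D P Z y eps) q |
              q in [set q : I -> R | forall k, \sum_(i : I) q i * y i k = mu k]].
Proof.
pose Fr (s : I -> R) := fine (F_D P Z y eps s).
have FDE : forall s, F_D P Z y eps s = (Fr s)%:E.
  by move=> s; rewrite /Fr fineK //; exact: (@FD_fin R d I y eps dT T P Z HZint HI s).
have Fr_conv : forall s t (l : R), 0 <= l <= 1 ->
    Fr (fun i => l * s i + (1 - l) * t i) <= l * Fr s + (1 - l) * Fr t.
  move=> s t l hl; have := @FD_conv R d I y eps dT T P Z HZint HI s t l hl.
  by rewrite !FDE -!EFinM -EFinD lee_fin.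
have FC_eq : forall th, F_C P Z y eps th = F_D P Z y eps (fun i => dotp th (y i)).
  move=> th; rewrite /F_C /F_D; apply: eq_integral => w _; apply: eq_bigr => i _.
  congr (_%:E); rewrite /dotp mulr_sumr -big_split /=; apply: eq_bigr => k _; ring.
apply/eqP; rewrite eq_le; apply/andP; split.
  apply: le_ereal_inf_tmp => _ [q Hq <-].
  apply: ge_ereal_sup => _ [th _ <-].
  rewrite FC_eq; apply: ereal_sup_ubound; exists (fun i => dotp th (y i)) => //.
  congr (_%:E - _)%E.
  rewrite /dotp; under eq_bigr do rewrite mulr_suml.
  rewrite exchange_big /=; apply: eq_bigr => k _; rewrite -(Hq k) mulr_sumr.
  by apply: eq_bigr => i _; ring.
have lb : ((- Fr (fun i => dotp (fun _ => 0) (y i)))%:E <= fenchel (F_C P Z y eps) mu)%E.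
  apply: ereal_sup_ubound; exists (fun _ => 0) => //.
  rewrite FC_eq FDE big1; first by rewrite /= add0e.
  by move=> k _; rewrite mul0r.
case Ec : (fenchel (F_C P Z y eps) mu) lb => [cr| |] lb; last by [].
  2: by rewrite leey.
have H0 : forall th, dotp th mu - Fr (fun i => dotp th (y i)) <= cr.
  move=> th; rewrite -lee_fin EFinB -FDE -FC_eq -Ec.
  by apply: ereal_sup_ubound; exists th.
have [q [Hq Hs]] := @dual_exists R I Fr Fr_conv d y mu cr H0.
apply: le_trans (ereal_inf_lbound _) _; first by exists q.
apply: ge_ereal_sup => _ [s _ <-].
by rewrite FDE -EFinB lee_fin.
Qed.
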